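(* Let $X$ be the Banach space defined in the context, with unit vector basis $(e_i)$. Let $(x_i)$ be a normalized block basis of $(e_i)$ which has a spreading model $(u_i)$. Then $\ell_p$ for $1<p<\infty$ and $c_0$ are not block finitely represented in $(u_i)$.
   Context: Let $f(i)=\log_2(1+i)$ and fix an increasing sequence of positive integers $(n_k)$ with $\sum_k 1/f(n_k)<1/10$. For $E,F\subseteq\mathbb{N}$, $E<F$ means $\max E<\min F$; for $x\in c_{00}$ (finitely supported real sequences) $Ex$ is the restriction of $x$ to $E$. Define norms on $c_{00}$ inductively: $\|x\|_{(0)}=\max_i|x(i)|$; $\|x\|_{(k,i)}=\max_{E_1<\cdots<E_i}\frac1{f(i)}\sum_{j=1}^i\|E_jx\|_{(k)}$; $\|x\|_{(k+1)}=\max\{\|x\|_{(k)},(\sum_{i}\|x\|_{(k,n_i)}^2)^{1/2}\}$. Then $\|x\|=\lim_k\|x\|_{(k)}$ is a $1$-unconditional norm satisfying $\|x\|=\max\{\|x\|_{c_0},(\sum_k\|x\|_{n_k}^2)^{1/2}\}$ with $\|x\|_k=\max_{E_1<\cdots<E_k}\frac1{f(k)}\sum_{i=1}^k\|E_ix\|$. $X$ is the completion of $c_{00}$ under $\|\cdot\|$, and $(e_i)$ is the unit vector basis. A sequence $(u_i)$ is a spreading model of $(x_i)$ if $\|\sum_{j=1}^n a_ju_j\|=\lim_{\ell\to\infty,\ \ell<i_1<\cdots<i_n}\|\sum_{j=1}^n a_jx_{i_j}\|$ for all $n$ and scalars $(a_j)$. A basic sequence $(w_i)$ (e.g. the unit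 vector basis of $\ell_p$ or $c_0$) is block finitely represented in $(y_i)$ if for all $\varepsilon>0$ and $n\in\mathbb{N}$ there is a block basis $(z_i)_{i=1}^n$ of $(y_i)$ with $(1+\varepsilon)^{-1}\|\sum_1^n a_iw_i\|\le\|\sum_1^n a_iz_i\|\le(1+\varepsilon)\|\sum_1^n a_iw_i\|$ for all scalars. *)

(* Defs.v *)
From HB Require Import structures.
From mathcomp Require Import all_boot all_order all_algebra.
From mathcomp Require Import all_classical all_reals all_analysis.
Set Implicit Arguments. Unset Strict Implicit. Unset Printing Implicit Defensive.
Import Order.TTheory GRing.Theory Num.Theory.
Import numFieldNormedType.Exports.
Local Open Scope classical_set_scope.
Local Open Scope ring_scope.

Section Defs.
Variable R : realType.

Definition flog (i : nat) : R := ln (1 + i%:R) / ln 2.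

Definition c00 (x : nat -> R) : Prop := exists N, forall i, (N <= i)%N -> x i = 0.

Definition restr (E : nat -> bool) (x : nat -> R) : nat -> R :=
  fun i => if E i then x i else 0.

Definition successive_sets (i : nat) (E : nat -> nat -> bool) : Prop :=
  forall j1 j2, (j1 < j2)%N -> (j2 < i)%N ->
    forall a b, E j1 a -> E j2 b -> (a < b)%N.

Definition norm_ki (N : (nat -> R) -> R) (i : nat) (x : nat -> R) : R :=
  sup [set (\sum_(j < i) N (restr (E j) x)) / flog i
      | E in [set E | successive_sets i E]].

Fixpoint normk (n : nat -> nat) (k : nat) (x : nat -> R) : R :=
  match k with
  | 0 => sup [set `|x i| | i in [set: nat]]
  | k'.+1 => Num.max (normk n k' x)
      (Num.sqrt (limn (series (fun m => (norm_ki (normk n k') (n m) x) ^+ 2))))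
  end.

Definition Xnorm (n : nat -> nat) (x : nat -> R) : R :=
  limn (fun k => normk n k x).

Definition admissible (n : nat -> nat) : Prop :=
  (0 < n 0)%N /\ (forall k, (n k < n k.+1)%N) /\
  cvgn (series (fun k => (flog (n k))^-1)) /\
  limn (series (fun k => (flog (n k))^-1)) < 10^-1.

Definition normalized_block_basis (n : nat -> nat) (x : nat -> nat -> R) : Prop :=
  (forall i, c00 (x i)) /\
  (forall i, exists m, x i m != 0) /\
  (forall i j, (i < j)%N -> forall a b, x i a != 0 -> x j b != 0 -> (a < b)%N) /\
  (forall i, Xnorm n (x i) = 1).

Definition spreading_model (n : nat -> nat) (x : nat -> nat -> R)
  (V : normedModType R) (u : nat -> V) : Prop :=
  forall (m : nat) (a : 'I_m -> R) (eps : R), 0 < eps ->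
    exists l : nat, forall s : 'I_m -> nat,
      (forall j, (l < s j)%N) ->
      (forall j1 j2 : 'I_m, (j1 < j2)%N -> (s j1 < s j2)%N) ->
      `| Xnorm n (fun t => \sum_(j < m) a j * x (s j) t)
         - `| \sum_(j < m) a j *: u j | | < eps.

Definition block_of (V : normedModType R) (u : nat -> V) (m : nat)
  (z : 'I_m -> V) : Prop :=
  exists (p : nat -> nat) (b : nat -> R),
    (forall i, (i < m)%N -> (p i < p i.+1)%N) /\
    (forall i : 'I_m, z i = \sum_(p i <= j < p i.+1) b j *: u j) /\
    (forall i : 'I_m, z i != 0).

(* a basic sequence (w_i), given through the norm W m a = || sum_{i<m} a_i w_i ||,
   is block finitely represented in (u_i) *)
Definition block_fin_rep (W : forall m : nat, ('I_m -> R) -> R)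
  (V : normedModType R) (u : nat -> V) : Prop :=
  forall (eps : R), 0 < eps -> forall m : nat,
    exists z : 'I_m -> V, block_of u z /\
      forall a : 'I_m -> R,
        (1 + eps)^-1 * W m a <= `| \sum_(i < m) a i *: z i | /\
        `| \sum_(i < m) a i *: z i | <= (1 + eps) * W m a.

Definition lp_norm (p : R) (m : nat) (a : 'I_m -> R) : R :=
  (\sum_(i < m) `|a i| `^ p) `^ p^-1.

Definition c0_norm (m : nat) (a : 'I_m -> R) : R :=
  \big[Num.max/0]_(i < m) `|a i|.

End Defs.

(* Main.v *)
Require Import Defs.
Set Warnings "-all".
From HB Require Import structures.
From mathcomp Require Import all_boot all_order all_algebra.
From mathcomp Require Import all_classical all_reals all_analysis.
From mathcomp Require Import ring lra.
Import Order.TTheory GRing.Theory Num.Theory.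
Import numFieldNormedType.Exports.
Set Implicit Arguments. Unset Strict Implicit. Unset Printing Implicit Defensive.
Local Open Scope ring_scope.

Definition suppb (R : realType) (N : nat) (x : nat -> R) :=
  forall t, (N <= t)%N -> x t = 0.
Definition B1 (R : realType) (N : nat) (x : nat -> R) : R :=
  \sum_(t < N) `|x t|.

Lemma B1_ge0 (R : realType) N (x : nat -> R) : 0 <= B1 N x.
Proof. by apply: sumr_ge0 => t _. Qed.

Lemma abs_le_B1 (R : realType) N (x : nat -> R) t :
  suppb N x -> `|x t| <= B1 N x.
Proof.
move=> hs; case: (ltnP t N) => h.
  rewrite /B1 (bigD1 (Ordinal h)) //= lerDl.
  by apply: sumr_ge0 => i _.
by rewrite hs // normr0 B1_ge0.
Qed.

Lemma suppb_restr (R : realType) N (x : nat -> R) E :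
  suppb N x -> suppb N (restr E x).
Proof. by move=> hs t ht; rewrite /restr hs //; case: (E t). Qed.

Lemma B1_restr_sum (R : realType) N (x : nat -> R) i E :
  successive_sets i E -> \sum_(j < i) B1 N (restr (E j) x) <= B1 N x.
Proof.
move=> hE; rewrite /B1 exchange_big /=; apply: ler_sum => t _.
case: (pselect (exists j : 'I_i, E j t)) => [[j0 Hj0]|H].
  rewrite (bigD1 j0) //= big1 ?addr0; first by rewrite /restr Hj0.
  move=> j hj; rewrite /restr; case Ej: (E j t); last by rewrite normr0.
  exfalso; case: (ltngtP j j0) => hjj.
  - by move: (hE _ _ hjj (ltn_ord j0) t t Ej Hj0); rewrite ltnn.
  - by move: (hE _ _ hjj (ltn_ord j) t t Hj0 Ej); rewrite ltnn.
  - by move: hj; rewrite -(inj_eq val_inj) /= hjj eqxx.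
rewrite big1 ?normr_ge0 // => j _; rewrite /restr.
case Ej: (E j t); last by rewrite normr0.
by exfalso; apply: H; exists j.
Qed.

Lemma ln2_gt0 (R : realType) : 0 < ln (2 : R).
Proof. by apply: ln_gt0; rewrite ltr1n. Qed.

Lemma flog_ge1 (R : realType) (i : nat) : (0 < i)%N -> 1 <= flog R i.
Proof.
move=> hi; rewrite /flog ler_pdivlMr ?ln2_gt0 // mul1r.
rewrite ler_ln ?posrE ?ltr0n //.
have -> : (2 : R) = 1 + 1 by [].
by rewrite lerD2l ler1n.
Qed.

Lemma flog_gt0 (R : realType) (i : nat) : (0 < i)%N -> 0 < flog R i.
Proof. by move=> hi; apply: lt_le_trans (flog_ge1 R hi). Qed.

Lemma norm_ki_props (R : realType) (Nm : (nat -> R) -> R) N i (x : nat -> R) :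
  (0 < i)%N -> suppb N x ->
  (forall y, suppb N y -> 0 <= Nm y <= B1 N y) ->
  (0 <= norm_ki Nm i x <= B1 N x / flog R i) /\
  forall E, successive_sets i E ->
    (\sum_(j < i) Nm (restr (E j) x)) / flog R i <= norm_ki Nm i x.
Proof.
move=> hi hs hN.
have fpos := flog_gt0 R hi.
rewrite /norm_ki.
set S := (X in sup X).
have ub : ubound S (B1 N x / flog R i).
  move=> _ [E hE <-]; rewrite ler_pM2r ?invr_gt0 //.
  apply: le_trans (B1_restr_sum N x hE).
  apply: ler_sum => j _.
  by case/andP: (hN _ (suppb_restr (E j) hs)).
have hub : has_ubound S by exists (B1 N x / flog R i).
have mem : forall E, successive_sets i E ->
    S ((\sum_(j < i) Nm (restr (E j) x)) / flog R i).
  by move=> E hE; exists E.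
have E0 : successive_sets i (fun _ _ => false) by [].
have v0ge : 0 <= (\sum_(j < i) Nm (restr ((fun _ _ => false) j) x)) / flog R i.
  apply: divr_ge0; last exact: ltW.
  apply: sumr_ge0 => j _.
  by case/andP: (hN _ (suppb_restr (fun _ => false) hs)).
split; last by move=> E hE; apply: (ub_le_sup hub); apply: mem.
apply/andP; split.
  apply: le_trans v0ge _.
  by apply: (ub_le_sup hub); apply: (mem (fun _ _ => false)).
apply: ge_sup => //.
by exists ((\sum_(j < i) Nm (restr ((fun _ _ => false) j) x)) / flog R i); apply: (mem (fun _ _ => false)).
Qed.

Lemma series_dom (R : realType) (a u : nat -> R) (c : R) :
  0 <= c -> (forall m, 0 <= a m <= c * u m) -> (forall m, 0 <= u m) ->
  cvgn (series u) ->
  cvgn (series a) /\ limn (series a) <= c * limn (series u) /\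
  forall m, a m <= limn (series a).
Proof.
move=> c0 hau hu cu.
have nda : nondecreasing_seq (series a).
  apply/nondecreasing_seqP => m; rewrite /series /= big_nat_recr //=.
  by rewrite lerDl; case/andP: (hau m).
have ndu : nondecreasing_seq (series u).
  apply/nondecreasing_seqP => m; rewrite /series /= big_nat_recr //=.
  by rewrite lerDl.
have bnd : forall m, series a m <= c * limn (series u).
  move=> m; apply: le_trans (_ : c * series u m <= _).
    rewrite /series /= mulr_sumr; apply: ler_sum => k _.
    by case/andP: (hau k).
  by rewrite ler_wpM2l //; apply: nondecreasing_cvgn_le.
have ca : cvgn (series a).
  apply: nondecreasing_is_cvgn => //.
  by exists (c * limn (series u)) => _ [m _ <-].
split => //; split.
  by apply: limr_le => //; apply: nearW.
move=> m; apply: le_trans (nondecreasing_cvgn_le nda ca m.+1).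
rewrite /series /= big_nat_recr //= lerDr.
by apply: sumr_ge0 => k _; case/andP: (hau k).
Qed.

Lemma n_pos (R : realType) n : admissible R n -> forall m, (0 < n m)%N.
Proof.
case=> h0 [hinc _]; elim=> // m IH.
exact: (ltn_trans IH (hinc m)).
Qed.

Lemma step_facts (R : realType) n (adm : admissible R n) N j (x : nat -> R) :
  (forall y : nat -> R, suppb N y -> 0 <= normk n j y <= B1 N y) -> suppb N x ->
  cvgn (series (fun m => norm_ki (normk n j) (n m) x ^+ 2)) /\
  limn (series (fun m => norm_ki (normk n j) (n m) x ^+ 2)) <= B1 N x ^+ 2 /\
  forall m, norm_ki (normk n j) (n m) x ^+ 2 <=
            limn (series (fun m => norm_ki (normk n j) (n m) x ^+ 2)).
Proof.
move=> hN hs.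
have adm' := adm; case: adm' => _ [_ [cu lu]].
have hu : forall m, 0 <= (flog R (n m))^-1.
  by move=> m; rewrite invr_ge0 ltW // flog_gt0 // (n_pos adm).
have c0 : 0 <= B1 N x ^+ 2 by apply: exprn_ge0; apply: B1_ge0.
have hau : forall m, 0 <= norm_ki (normk n j) (n m) x ^+ 2 <=
                     B1 N x ^+ 2 * (flog R (n m))^-1.
  move=> m.
  have [/andP [h0 h1] _] := norm_ki_props (n_pos adm m) hs hN.
  have f1 := flog_ge1 R (n_pos adm m).
  have fi1 : (flog R (n m))^-1 <= 1 by rewrite invf_le1 // (lt_le_trans ltr01).
  apply/andP; split; first exact: exprn_ge0.
  rewrite expr2; apply: le_trans (ler_pM h0 h0 h1 h1) _.
  rewrite [X in _ <= X](_ : _ = B1 N x ^+ 2 * (flog R (n m))^-1 * 1); last by rewrite mulr1.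
  rewrite [X in X <= _](_ : _ = B1 N x ^+ 2 * (flog R (n m))^-1 * (flog R (n m))^-1); last first.
    by rewrite expr2 -!mulrA [X in _ * X = _]mulrCA.
  by apply: ler_wpM2l => //; apply: mulr_ge0 => //.
have [ca [la ra]] := series_dom c0 hau hu cu.
split => //; split => //.
apply: le_trans la _; apply: ler_piMr => //.
apply: le_trans (ltW lu) _.
by rewrite invf_le1 // ler1n.
Qed.

Lemma normk_bound (R : realType) n (adm : admissible R n) N :
  forall j (x : nat -> R), suppb N x -> 0 <= normk n j x <= B1 N x.
Proof.
elim=> [|j IH] x hs /=.
  set S := (X in sup X).
  have hub : has_ubound S.
    by exists (B1 N x) => _ [i _ <-]; apply: abs_le_B1.
  apply/andP; split.
    apply: le_trans (normr_ge0 (x 0%N)) _.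
    by apply: (ub_le_sup hub); exists 0%N.
  apply: ge_sup; first by exists `|x 0%N|, 0%N.
  by move=> _ [i _ <-]; apply: abs_le_B1.
have [_ [l _]] := step_facts adm IH hs.
have [h0 h1] := andP (IH x hs).
apply/andP; split; first by rewrite le_max h0.
rewrite ge_max h1 /=.
by rewrite -(ger0_norm (B1_ge0 N x)) -sqrtr_sqr ler_sqrt ?exprn_ge0 ?B1_ge0.
Qed.

Lemma normk_step_ge (R : realType) n (adm : admissible R n) N j k (x : nat -> R) :
  suppb N x -> norm_ki (normk n j) (n k) x <= normk n j.+1 x.
Proof.
move=> hs.
have hN := fun y (hy : suppb N y) => normk_bound adm j hy.
have [_ [_ r]] := step_facts adm hN hs.
have [/andP [h0 _] _] := norm_ki_props (n_pos adm k) hs hN.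
rewrite /= le_max; apply/orP; right.
rewrite -(ger0_norm h0) -sqrtr_sqr ler_sqrt; first exact: r.
exact: le_trans (exprn_ge0 2 h0) (r k).
Qed.

Lemma Xnorm_props (R : realType) n (adm : admissible R n) N (x : nat -> R) :
  suppb N x -> cvgn (fun j => normk n j x) /\
  (forall j, normk n j x <= Xnorm n x) /\ 0 <= Xnorm n x.
Proof.
move=> hs.
have nd : nondecreasing_seq (fun j => normk n j x).
  by apply/nondecreasing_seqP => j /=; rewrite le_max lexx.
have c : cvgn (fun j => normk n j x).
  apply: nondecreasing_is_cvgn => //.
  by exists (B1 N x) => _ [j _ <-]; case/andP: (normk_bound adm j hs).
have ge := nondecreasing_cvgn_le nd c.
split => //; split => //.
by apply: le_trans (ge 0%N); case/andP: (normk_bound adm 0 hs).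
Qed.

Lemma cvg_bigsum (R : realType) (M : nat) (F : 'I_M -> nat -> R) (l : 'I_M -> R) :
  (forall i, (F i @ \oo --> l i)%classic) ->
  ((fun j => \sum_(i < M) F i j) @ \oo --> \sum_(i < M) l i)%classic.
Proof.
elim: M F l => [|M IH] F l H.
  rewrite big_ord0.
  have -> : (fun j => \sum_(i < 0) F i j) = (fun _ => 0).
    by apply: funext => j; rewrite big_ord0.
  exact: cvg_cst.
rewrite big_ord_recr /=.
have -> : (fun j => \sum_(i < M.+1) F i j) =
   ((fun j => \sum_(i < M) F (widen_ord (leqnSn M) i) j) + F ord_max)%R.
  by apply: funext => j; rewrite big_ord_recr.
apply: cvgD; last exact: H.
by apply: IH => i; apply: H.
Qed.

Lemma Xnorm_lower (R : realType) n (adm : admissible R n) N (x : nat -> R) k E :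
  suppb N x -> successive_sets (n k) E ->
  (\sum_(i < n k) Xnorm n (restr (E i) x)) / flog R (n k) <= Xnorm n x.
Proof.
move=> hs hE.
have hv : ((fun j => (\sum_(i < n k) normk n j (restr (E i) x)) / flog R (n k)) @ \oo
   --> (\sum_(i < n k) Xnorm n (restr (E i) x)) / flog R (n k))%classic.
  apply: cvgMr_tmp; apply: cvg_bigsum => i.
  by have [c _] := Xnorm_props adm (suppb_restr (E i) hs).
rewrite -(cvg_lim _ hv) //.
apply: limr_le; first exact: (cvgP _ hv).
apply: nearW => j.
have hN := fun (y : nat -> R) (hy : suppb N y) => normk_bound adm j hy.
have [_ h2] := norm_ki_props (n_pos adm k) hs hN.
apply: le_trans (h2 E hE) _; apply: le_trans (normk_step_ge adm j k hs) _.
by have [_ [ge _]] := Xnorm_props adm hs; apply: ge.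
Qed.

Lemma sum_range (V : zmodType) (m a b : nat) (F : nat -> V) : (b <= m)%N ->
  \sum_(a <= j < b) F j = \sum_(j < m) (if (a <= j < b)%N then F j else 0).
Proof.
move=> hb; rewrite -big_mkcond /=.
rewrite -(big_mkord (fun j => (a <= j < b)%N) F).
rewrite -(big_nat_widen 0 b m (fun j => (a <= j)%N) F hb).
rewrite big_geq_mkord big_mkord.
by apply: eq_bigl => j.
Qed.

Lemma c00_sum (R : realType) m (G : 'I_m -> nat -> R) :
  (forall j, c00 (G j)) -> c00 (fun t => \sum_(j < m) G j t).
Proof.
move=> hG; have [Nf hN] := fin_all_exists hG.
exists (\max_(j < m) Nf j) => t ht; apply: big1 => j _; apply: hN.
exact: leq_trans (leq_bigmax j) ht.
Qed.

Lemma sum_neq0 (R : realType) m (F : 'I_m -> R) :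
  \sum_(j < m) F j != 0 -> exists j, F j != 0.
Proof.
move=> h; apply/not_existsP => H; move/eqP: h; apply.
by apply: big1 => j _; apply/eqP/negP => /negP hj; apply: (H j).
Qed.

Lemma core (R : realType) n (x : nat -> nat -> R) (V : normedModType R) (u : nat -> V) :
  admissible R n -> normalized_block_basis n x -> spreading_model n x u ->
  forall k (z : 'I_(n k) -> V) (eps : R), 0 < eps -> block_of u z ->
  (\sum_(i < n k) (`|z i| - eps)) / flog R (n k) - eps <= `|\sum_(i < n k) z i|.
Proof.
move=> adm [xc00 [_ [xblk _]]] sm k z eps he [p [b [hp [hz _]]]].
have pmono : forall i i', (i <= i')%N -> (i' <= n k)%N -> (p i <= p i')%N.
  move=> i i'; elim: i' => [|i' IH].
    by rewrite leqn0 => /eqP -> _.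
  move=> hii' hi'; rewrite leq_eqVlt in hii'; case/orP: hii' => [/eqP -> //|hlt].
  exact: leq_trans (IH hlt (ltnW hi')) (ltnW (hp i' hi')).
set m := p (n k).
pose c (i : nat) (j : nat) : R := if (p i <= j < p i.+1)%N then b j else 0.
pose A (j : 'I_m) : R := \sum_(i < n k) c i j.
have hzc : forall i : 'I_(n k), z i = \sum_(j < m) c i j *: u j.
  move=> i; rewrite hz (@sum_range _ m (p i) (p i.+1) (fun j => b j *: u j) (pmono _ _ (ltn_ord i) (leqnn _))).
  by apply: eq_bigr => j _; rewrite /c; case: ifP => _ //; rewrite scale0r.
have hsumz : \sum_(i < n k) z i = \sum_(j < m) A j *: u j.
  rewrite (eq_bigr _ (fun i _ => hzc i)) exchange_big /=.
  by apply: eq_bigr => j _; rewrite /A scaler_suml.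
have [l0 h0] := sm m A eps he.
have [lf hf] := fin_all_exists (fun i : 'I_(n k) => sm m (fun j : 'I_m => c i j) eps he).
pose L := (l0 + \max_(i < n k) lf i)%N.
pose s (j : 'I_m) : nat := (L + j).+1.
have sgt : forall l, (l <= L)%N -> forall j, (l < s j)%N.
  by move=> l hl j; rewrite ltnS (leq_trans hl) // leq_addr.
have sinc : forall j1 j2 : 'I_m, (j1 < j2)%N -> (s j1 < s j2)%N.
  by move=> j1 j2 h; rewrite ltnS ltn_add2l.
have H0 := h0 s (sgt _ (leq_addr _ _)) sinc.
have Hi := fun i : 'I_(n k) => hf i s (sgt _ (leq_trans (leq_bigmax i) (leq_addl _ _))) sinc.
pose Y (i : nat) (t : nat) : R := \sum_(j < m) c i j * x (s j) t.
pose y (t : nat) : R := \sum_(j < m) A j * x (s j) t.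
have yY : forall t, y t = \sum_(i < n k) Y i t.
  move=> t; rewrite /y /Y exchange_big /=.
  by apply: eq_bigr => j _; rewrite /A mulr_suml.
have xdisj : forall i1 i2 a, x i1 a != 0 -> x i2 a != 0 -> i1 = i2.
  move=> i1 i2 a h1 h2; case: (ltngtP i1 i2) => // h.
    by have := xblk _ _ h a a h1 h2; rewrite ltnn.
  by have := xblk _ _ h a a h2 h1; rewrite ltnn.
have cnz : forall i j, c i j != 0 -> (p i <= j < p i.+1)%N.
  by move=> i j; rewrite /c; case: ifP => // _; rewrite eqxx.
have Ynz : forall i t, Y i t != 0 ->
    exists j : 'I_m, (p i <= j < p i.+1)%N /\ x (s j) t != 0.
  move=> i t /sum_neq0 [j hj]; exists j.
  rewrite mulf_eq0 negb_or in hj; case/andP: hj => h1 h2; split => //.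
  exact: cnz.
have rng : forall i1 i2 j1 j2, (i1 < i2)%N -> (i2 <= n k)%N ->
    (p i1 <= j1 < p i1.+1)%N -> (p i2 <= j2 < p i2.+1)%N -> (j1 < j2)%N.
  move=> i1 i2 j1 j2 hi hi2 /andP[_ h1] /andP[h2 _].
  exact: leq_trans h1 (leq_trans (pmono _ _ hi hi2) h2).
have Y0 : forall i i' t, (i < n k)%N -> (i' < n k)%N -> i != i' ->
    Y i t != 0 -> Y i' t = 0.
  move=> i i' t hi hi' hne /Ynz [j0 [hj0 hx0]].
  apply: big1 => j _.
  case: (eqVneq (c i' j) 0) => [-> | hc]; first by rewrite mul0r.
  have hj := cnz _ _ hc.
  case: (eqVneq (x (s j) t) 0) => [-> |hx]; first by rewrite mulr0.
  exfalso; have e := xdisj _ _ _ hx hx0.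
  have ej : (j : nat) = j0 by move: e; rewrite /s => /succn_inj /addnI.
  move: hne; case: (ltngtP i i') => // hlt _.
    by have := rng _ _ _ _ hlt (ltnW hi') hj0 hj; rewrite ej ltnn.
  by have := rng _ _ _ _ hlt (ltnW hi) hj hj0; rewrite ej ltnn.
pose E (i t : nat) : bool := Y i t != 0.
have hE : successive_sets (n k) E.
  move=> i1 i2 hi hi2 a1 a2 /Ynz [j1 [hj1 hx1]] /Ynz [j2 [hj2 hx2]].
  have hj := rng _ _ _ _ hi (ltnW hi2) hj1 hj2.
  exact: xblk _ _ (sinc _ _ hj) _ _ hx1 hx2.
have hrestr : forall i : 'I_(n k), restr (E i) y = Y i.
  move=> i; apply: funext => t; rewrite /restr /E.
  case: ifP => hY; last by move/negbFE: hY => /eqP ->.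
  rewrite yY (bigD1 i) //= big1 ?addr0 // => i' hi'.
  by apply: (Y0 i) => //; rewrite eq_sym.
have yc : c00 y.
  have h : forall j : 'I_m, c00 (fun t => A j * x (s j) t).
    by move=> j; have [N hN] := xc00 (s j); exists N => t ht; rewrite hN // mulr0.
  exact: (c00_sum h).
case: yc => N hN.
have low := Xnorm_lower adm (hN : suppb N y) hE.
have e : \sum_(i < n k) Xnorm n (restr (E i) y) = \sum_(i < n k) Xnorm n (Y i).
  by apply: eq_bigr => i _; rewrite hrestr.
rewrite e in low.
have H0' : Xnorm n y - `|\sum_(i < n k) z i| < eps.
  by rewrite hsumz; move: H0 => /ltr_normlP [_].
have Hi' : forall i : 'I_(n k), `|z i| - eps <= Xnorm n (Y i).
  move=> i; move: (Hi i) => /ltr_normlP [h _].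
  rewrite (hzc i); move: h; set a := Xnorm n _; set bb := `|_|; lra.

have fpos := flog_gt0 R (n_pos adm k).
have step1 : (\sum_(i < n k) (`|z i| - eps)) / flog R (n k) <=
             (\sum_(i < n k) Xnorm n (Y i)) / flog R (n k).
  by apply: ler_wpM2r; [rewrite invr_ge0 ltW | apply: ler_sum => i _; apply: Hi'].
have := le_trans step1 low; move: H0'; lra.
Qed.

Lemma n_ge (R : realType) n : admissible R n -> forall k, (k <= n k)%N.
Proof.
case=> h0 [hinc _]; elim=> // k IH.
exact: leq_ltn_trans IH (hinc k).
Qed.

Lemma asym (R : realType) n (adm : admissible R n) (r : R) : 0 < r -> r < 1 ->
  exists k, 12 * flog R (n k) * (n k)%:R `^ r < (n k)%:R.
Proof.
move=> r0 r1.
pose d := (1 - r) / 2.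
have d0 : 0 < d by rewrite /d divr_gt0 // subr_gt0.
have d1 : d <= 1 by rewrite /d ler_pdivrMr //; lra.
have l2 := ln2_gt0 R.
pose C := 24 / (d * ln 2).
have C0 : 0 < C by rewrite /C divr_gt0 // mulr_gt0.
exists (Num.truncn (C `^ d^-1)).+1.
set k := (Num.truncn _).+1.
set M := (n k)%:R.
have M1 : 1 <= M by rewrite /M ler1n (n_pos adm).
have M0 : 0 < M by apply: lt_le_trans M1.
have MC : C `^ d^-1 < M.
  apply: lt_le_trans (truncnS_gt _) _.
  by rewrite /M ler_nat (n_ge adm).
have CQ : C < M `^ d.
  have := gt0_ltr_powR d0 _ _ MC.
  rewrite -powRrM mulVf ?gt_eqF // powRr1 ?ltW //.
  apply; rewrite nnegrE ?powR_ge0 // ltW //.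
set Q := M `^ d.
set P := M `^ r.
have Q0 : 0 < Q by apply: powR_gt0.
have P0 : 0 < P by apply: powR_gt0.
have MPQ : M = P * Q * Q.
  have hM : M != 0 by rewrite gt_eqF.
  rewrite /P /Q -!powRD ?hM ?implybT //.
  rewrite (_ : r + d + d = 1); first by rewrite powRr1 ?ltW.
  by rewrite /d; lra.
have h1 : ln (1 + M) < 2 * Q / d.
  have hp : 0 < (1 + M) `^ d by apply: powR_gt0; lra.
  have := ln_sublinear hp; rewrite ln_powR => hl.
  have hb : (1 + M) `^ d <= 2 * Q.
    have h2 : (2 : R) `^ d <= 2 by apply: ler1_powR; rewrite ?ler1n.
    have hb1 : (1 + M) `^ d <= (2 * M) `^ d.
      by apply: ge0_ler_powR; [exact: ltW | rewrite nnegrE; lra | rewrite nnegrE; lra | lra].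
    have hb2 : (2 * M) `^ d <= 2 * Q.
      rewrite powRM ?ler0n ?(ltW M0) //; apply: ler_wpM2r => //; exact: ltW.
    exact: le_trans hb1 hb2.
  rewrite ltr_pdivlMr //; rewrite mulrC; apply: lt_le_trans hl hb.
have e1 : 12 * (ln (1 + M) / ln 2) < 12 * ((2 * Q / d) / ln 2).
  by rewrite ltr_pM2l // ltr_pM2r ?invr_gt0.
have e2 : 12 * ((2 * Q / d) / ln 2) = C * Q.
  by rewrite /C; field; rewrite ?gt_eqF.
have e3 : C * Q < Q * Q by rewrite ltr_pM2r.
have e4 : 12 * (ln (1 + M) / ln 2) * P < Q * Q * P.
  by rewrite ltr_pM2r //; apply: lt_trans e3; rewrite -e2.
rewrite /flog -/M; apply: (lt_le_trans e4).
by rewrite [X in _ <= X]MPQ mulrC mulrA.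
Qed.

Lemma final_contra (R : realType) n (x : nat -> nat -> R) (V : normedModType R)
  (u : nat -> V) (adm : admissible R n) (nbb : normalized_block_basis n x)
  (sm : spreading_model n x u) k (z : 'I_(n k) -> V) (P : R) :
  1 <= P -> 12 * flog R (n k) * P < (n k)%:R -> block_of u z ->
  (forall i, 2^-1 <= `|z i|) -> `|\sum_(i < n k) z i| <= 2 * P -> False.
Proof.
move=> P1 hk hb hz hs.
have e4 : (0:R) < 4^-1 by rewrite invr_gt0.
have hc := core adm nbb sm e4 hb.
have fpos := flog_gt0 R (n_pos adm k).
have hcst : \sum_(i < n k) (4^-1 : R) = (n k)%:R * 4^-1.
  by rewrite sumr_const card_ord mulr_natl.
have hsum : (n k)%:R * 4^-1 <= \sum_(i < n k) (`|z i| - 4^-1).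
  rewrite -hcst; apply: ler_sum => i _; have := hz i; lra.
have h1 : ((n k)%:R * 4^-1) / flog R (n k) <=
          (\sum_(i < n k) (`|z i| - 4^-1)) / flog R (n k).
  by apply: ler_wpM2r => //; rewrite invr_ge0 ltW.
have h3 : 3 * P < ((n k)%:R * 4^-1) / flog R (n k).
  rewrite ltr_pdivlMr //; move: hk; lra.
move: hc h1 h3 hs P1; lra.
Qed.

Lemma sum_delta (R : realType) (V : normedModType R) m (z : 'I_m -> V) i :
  \sum_(j < m) (if j == i then 1 else 0) *: z j = z i.
Proof.
rewrite (bigD1 i) //= eqxx scale1r big1 ?addr0 // => j /negbTE ->.
by rewrite scale0r.
Qed.

Theorem proposition1p2 (R : realType) (n : nat -> nat) (x : nat -> nat -> R)
  (V : normedModType R) (u : nat -> V) :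
  admissible R n ->
  normalized_block_basis n x ->
  spreading_model n x u ->
  (forall p : R, 1 < p -> ~ block_fin_rep (lp_norm p) u) /\
  ~ block_fin_rep (@c0_norm R) u.
Proof.
move=> adm nbb sm; split.
  move=> p hp hbf.
  have p0 : 0 < p by apply: lt_trans hp.
  have r0 : 0 < p^-1 by rewrite invr_gt0.
  have r1 : p^-1 < 1 by rewrite invf_lt1.
  have [k hk] := asym adm r0 r1.
  have [z [hzb hzw]] := hbf 1 ltr01 (n k).
  have M1 : (1 : R) <= (n k)%:R by rewrite ler1n (n_pos adm).
  apply: (final_contra adm nbb sm (P := (n k)%:R `^ p^-1)) hk hzb _ _.
  - have := ge0_ler_powR (ltW r0) _ _ M1; rewrite powR1; apply.
      by rewrite nnegrE.
    by rewrite nnegrE; apply: le_trans M1.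
  - move=> i; have [h _] := hzw (fun j => if j == i then 1 else 0).
    rewrite sum_delta in h; apply: le_trans h.
    rewrite /lp_norm (bigD1 i) //= eqxx normr1 powR1 big1 ?addr0.
      by rewrite powR1 mulr1.
    by move=> j /negbTE ->; rewrite normr0 powR0 // gt_eqF.
  - have [_ h] := hzw (fun _ => 1).
    have e : \sum_(i < n k) (1 : R) *: z i = \sum_(i < n k) z i.
      by apply: eq_bigr => i _; rewrite scale1r.
    rewrite e in h; apply: le_trans h _.
    rewrite /lp_norm.
    have -> : \sum_(i < n k) `|(1 : R)| `^ p = (n k)%:R.
      by rewrite normr1 powR1 sumr_const card_ord.
    done.
move=> hbf.
have r0 : (0 : R) < 2^-1 by rewrite invr_gt0.
have r1 : (2 : R)^-1 < 1 by rewrite invf_lt1 // ltr1n.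
have [k hk] := asym adm r0 r1.
have [z [hzb hzw]] := hbf 1 ltr01 (n k).
have M1 : (1 : R) <= (n k)%:R by rewrite ler1n (n_pos adm).
have fpos := flog_gt0 R (n_pos adm k).
apply: (final_contra adm nbb sm (P := 1)) _ hzb _ _ => //.
- apply: le_lt_trans hk; apply: ler_wpM2l.
    by apply: mulr_ge0 => //; apply: ltW.
  have := ge0_ler_powR (ltW r0) _ _ M1; rewrite powR1; apply.
    by rewrite nnegrE.
  by rewrite nnegrE; apply: le_trans M1.
- move=> i; have [h _] := hzw (fun j => if j == i then 1 else 0).
  rewrite sum_delta in h; apply: le_trans h.
  have hc : 1 <= c0_norm (fun j : 'I_(n k) => if j == i then (1 : R) else 0).
    rewrite /c0_norm.
    have {1}-> : (1 : R) = `|(if i == i then (1 : R) else 0)| by rewrite eqxx normr1.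
    exact: le_bigmax_cond.
  have -> : (1 + 1 : R)^-1 = 2^-1 by [].
  by rewrite -[X in X <= _]mulr1 ler_wpM2l // invr_ge0.
- have [_ h] := hzw (fun _ => 1).
  have e : \sum_(i < n k) (1 : R) *: z i = \sum_(i < n k) z i.
    by apply: eq_bigr => i _; rewrite scale1r.
  rewrite e in h; apply: le_trans h _.
  rewrite ler_wpM2l //.
  rewrite /c0_norm; apply: bigmax_le => //; by move=> i _; rewrite normr1.
Qed.
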